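(* Let $\sigma$ be a prime 2-structure and let $X\subsetneq V(\sigma)$ be such that $\sigma[X]$ is prime; write $\overline{X}=V(\sigma)\setminus X$. Suppose that $q^a_{(\sigma,\overline{X})}\neq\emptyset$. If $\overline{X}$ is finite and $|\overline{X}|\geq 4$, then there exist distinct $v,w\in\overline{X}$ such that $\sigma-\{v,w\}$ is prime.
   Context: A 2-structure $\sigma$ consists of a vertex set $V(\sigma)$ and an equivalence relation $\equiv_\sigma$ on ordered pairs of distinct vertices; $E(\sigma)$ is its set of equivalence classes. $\sigma[W]$ is the induced 2-structure on $W$; $\sigma-W=\sigma[V(\sigma)\setminus W]$. A module is a set $M$ such that for all $x,y\in M$ and $v\notin M$, $(x,v)\equiv_\sigma(y,v)$ and $(v,x)\equiv_\sigma(v,y)$; $\emptyset$, $V(\sigma)$, singletons are trivial; $\sigma$ is prime if $|V(\sigma)|\geq3$ and all modules are trivial. For $X$ with $\sigma[X]$ prime: $\langle X\rangle_\sigma$ is the set of $v\in\overline{X}$ such that $X$ is a module of $\sigma[X\cup\{v\}]$; for $\alpha\in X$, $X_\sigma(\alpha)$ is the set of $v\in\overline{X}$ such that $\{\alpha,v\}$ is a module of $\sigma[X\cup\{v\}]$. For $e,f\in E(\sigma)$: $\langle X\rangle^{(e,f)}_\sigma$ is the set of $v\in\langle X\rangle_\sigma$ with $(v,\alpha)\in e$ and $(\alpha,v)\in f$ for $\alpha\in X$ (independent of $\alpha$); $X^{(e,f)}_\sigma(\alpha)$ is the set of $v\in X_\sigma(\alpha)$ with $(v,\alpha)\in e$ and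 $(\alpha,v)\in f$. $q^a_{(\sigma,\overline{X})}$ is the set of nonempty sets of the form $\langle X\rangle^{(e,f)}_\sigma$ or $X^{(e,f)}_\sigma(\alpha)$ ($\alpha\in X$) with $e\neq f$. *)

(* Defs.v *)
(* 2-structures on an arbitrary vertex type T (V(sigma) = all of T);
   subsets of vertices are predicates T -> Prop. *)
From Stdlib Require Import List.
Import ListNotations.

Definition is_2structure {T : Type} (R : T * T -> T * T -> Prop) : Prop :=
  (forall p q, R p q -> fst p <> snd p /\ fst q <> snd q) /\
  (forall p, fst p <> snd p -> R p p) /\
  (forall p q, R p q -> R q p) /\
  (forall p q r, R p q -> R q r -> R p r).

(* M is a module of sigma[W] (M is a subset of W). *)
Definition is_module {T : Type} (R : T * T -> T * T -> Prop) (W M : T -> Prop) : Prop :=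
  (forall x, M x -> W x) /\
  forall x y v, M x -> M y -> W v -> ~ M v ->
    R (x, v) (y, v) /\ R (v, x) (v, y).

Definition trivial_in {T : Type} (W M : T -> Prop) : Prop :=
  (forall x, ~ M x) \/ (forall x, M x <-> W x) \/ (exists a, forall x, M x <-> x = a).

Definition prime_on {T : Type} (R : T * T -> T * T -> Prop) (W : T -> Prop) : Prop :=
  (exists a b c, W a /\ W b /\ W c /\ a <> b /\ a <> c /\ b <> c) /\
  forall M, is_module R W M -> trivial_in W M.

Definition is_class {T : Type} (R : T * T -> T * T -> Prop) (e : T * T -> Prop) : Prop :=
  exists p, fst p <> snd p /\ forall q, e q <-> R p q.

Definition addv {T : Type} (X : T -> Prop) (v : T) : T -> Prop := fun u => X u \/ u = v.

Definition in_angle {T : Type} (R : T * T -> T * T -> Prop) (X : T -> Prop) (v : T) : Prop :=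
  ~ X v /\ is_module R (addv X v) X.

Definition in_Xalpha {T : Type} (R : T * T -> T * T -> Prop) (X : T -> Prop) (alpha v : T) : Prop :=
  ~ X v /\ is_module R (addv X v) (fun u => u = alpha \/ u = v).

Definition in_angle_ef {T : Type} (R : T * T -> T * T -> Prop) (X : T -> Prop)
    (e f : T * T -> Prop) (v : T) : Prop :=
  in_angle R X v /\ forall alpha, X alpha -> e (v, alpha) /\ f (alpha, v).

Definition in_Xalpha_ef {T : Type} (R : T * T -> T * T -> Prop) (X : T -> Prop)
    (alpha : T) (e f : T * T -> Prop) (v : T) : Prop :=
  in_Xalpha R X alpha v /\ e (v, alpha) /\ f (alpha, v).

(* Y belongs to q^a_{(sigma, complement of X)} *)
Definition in_qa {T : Type} (R : T * T -> T * T -> Prop) (X : T -> Prop) (Y : T -> Prop) : Prop :=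
  (exists v, Y v) /\
  exists e f, is_class R e /\ is_class R f /\ ~ (forall p, e p <-> f p) /\
    ((forall v, Y v <-> in_angle_ef R X e f v) \/
     (exists alpha, X alpha /\ forall v, Y v <-> in_Xalpha_ef R X alpha e f v)).

(* Main.v *)
Require Import Defs.
From Stdlib Require Import List.
From Stdlib Require Import Classical Lia Arith.
Import ListNotations.

Section Basics.
Variable T : Type.
Variable R : T * T -> T * T -> Prop.
Hypothesis H2 : is_2structure R.

Lemma Rsym : forall p q, R p q -> R q p.
Proof. destruct H2 as [_ [_ [H _]]]. auto. Qed.
Lemma Rtr : forall p q r, R p q -> R q r -> R p r.
Proof. destruct H2 as [_ [_ [_ H]]]. eauto. Qed.
Lemma Rrefl : forall a b, a <> b -> R (a,b) (a,b).
Proof. destruct H2 as [_ [H _]]. intros a b h. apply (H (a,b)). exact h. Qed.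
Lemma Rne1 : forall a b q, R (a,b) q -> a <> b.
Proof. destruct H2 as [H _]. intros a b q h. apply (H _ _ h). Qed.
Lemma Rne2 : forall a b p, R p (a,b) -> a <> b.
Proof. destruct H2 as [H _]. intros a b p h. apply (H _ _ h). Qed.

Lemma mod_ext : forall W W' M M', (forall x, W x <-> W' x) -> (forall x, M x <-> M' x) ->
  is_module R W M -> is_module R W' M'.
Proof.
  intros W W' M M' hW hM [h1 h2]. split.
  - intros x hx. apply hW, h1, hM, hx.
  - intros x y v hx hy hv hnv. apply h2; try apply hM; auto. apply hW; auto.
    intro h; apply hnv, hM, h.
Qed.

Lemma prime_ext : forall W W', (forall x, W x <-> W' x) -> prime_on R W -> prime_on R W'.
Proof.
  intros W W' hW [[a [b [c H]]] hp]. split.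
  - exists a, b, c. intuition; apply hW; auto.
  - intros M hM. assert (hM' : is_module R W M).
    { apply (mod_ext W' W M M); auto. intro x; split; apply hW. intro; tauto. }
    destruct (hp M hM') as [h|[h|h]].
    + left; exact h.
    + right; left. intro x. rewrite h. split; apply hW.
    + right; right; exact h.
Qed.

Lemma mod_restrict : forall W W' M, is_module R W M -> (forall x, W' x -> W x) ->
  is_module R W' (fun x => M x /\ W' x).
Proof.
  intros W W' M [h1 h2] hs. split.
  - intros x [_ hx]; exact hx.
  - intros x y v [hx _] [hy _] hv hnv. apply h2; auto; intro hm; apply hnv; auto.
Qed.

Lemma prime_contra : forall W M a b c, prime_on R W -> is_module R W M ->
  M a -> M b -> a <> b -> W c -> ~ M c -> False.
Proof.
  intros W M a b c [_ hp] hM ha hb hab hc hnc.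
  destruct (hp M hM) as [h|[h|[d h]]].
  - apply (h a ha).
  - apply hnc, h, hc.
  - apply hab. rewrite (proj1 (h a) ha), (proj1 (h b) hb). reflexivity.
Qed.

Lemma mod_rep : forall W M, (forall x, M x -> W x) ->
  (forall v, W v -> ~ M v -> exists r, forall m, M m -> R (m,v) (r,v) /\ R (v,m) (v,r)) ->
  is_module R W M.
Proof.
  intros W M h1 h2. split; auto.
  intros x y v hx hy hv hnv. destruct (h2 v hv hnv) as [r hr].
  destruct (hr x hx) as [a1 a2]. destruct (hr y hy) as [b1 b2].
  split; eapply Rtr; eauto; apply Rsym; auto.
Qed.

Lemma triv_inter : forall B Z M, prime_on R B -> is_module R Z M -> (forall x, B x -> Z x) ->
  (forall x, B x -> ~ M x) \/ (forall x, B x -> M x) \/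
  (exists g, B g /\ M g /\ forall x, B x -> M x -> x = g).
Proof.
  intros B Z M [_ hp] hM hs.
  destruct (hp _ (mod_restrict Z B M hM hs)) as [h|[h|[g h]]].
  - left. intros x hx hm. apply (h x). auto.
  - right; left. intros x hx. apply h; auto.
  - right; right. exists g. destruct (proj2 (h g) eq_refl). repeat split; auto.
    intros x hx hm. apply h; auto.
Qed.


Definition U2 (B : T -> Prop) a b := fun z => B z \/ z = a \/ z = b.
Definition nd o a b := R (o,a) (o,b) /\ R (a,o) (b,o).
Definition tw (B : T -> Prop) a b := forall x, B x -> R (x,a) (x,b) /\ R (a,x) (b,x).

Lemma mod_restr2 : forall W W' M M', is_module R W M -> (forall x, W' x -> W x) ->
  (forall x, W' x -> (M x <-> M' x)) -> (forall x, M' x -> W' x) -> is_module R W' M'.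
Proof.
  intros W W' M M' hM hs he hM'. split; auto.
  intros x y v hx hy hv hnv. apply hM; auto.
  - apply he; auto.
  - apply he; auto.
  - intro h; apply hnv, he; auto.
Qed.

Lemma not_prime_mod : forall W, (exists a b c, W a /\ W b /\ W c /\ a <> b /\ a <> c /\ b <> c) ->
  ~ prime_on R W -> exists M, is_module R W M /\ ~ trivial_in W M.
Proof.
  intros W h3 hn. apply NNPP. intro hc. apply hn. split; auto.
  intros M hM. apply NNPP. intro ht. apply hc. exists M. auto.
Qed.

Lemma three_sub : forall (B B' : T -> Prop), (forall x, B x -> B' x) ->
  (exists a b c, B a /\ B b /\ B c /\ a <> b /\ a <> c /\ b <> c) ->
  (exists a b c, B' a /\ B' b /\ B' c /\ a <> b /\ a <> c /\ b <> c).
Proof. intros B B' hs [a [b [c h]]]. exists a, b, c. intuition. Qed.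

Lemma two_others : forall B : T -> Prop, (exists a b c, B a /\ B b /\ B c /\ a <> b /\ a <> c /\ b <> c) ->
  forall g, exists x y, B x /\ B y /\ x <> y /\ x <> g /\ y <> g.
Proof.
  intros B [a [b [c h]]] g.
  destruct (classic (a = g)) as [ea|na].
  - subst. exists b, c. intuition.
  - destruct (classic (b = g)) as [eb|nb].
    + subst. exists a, c. intuition.
    + exists a, b. intuition.
Qed.

Lemma one_other : forall B : T -> Prop, (exists a b c, B a /\ B b /\ B c /\ a <> b /\ a <> c /\ b <> c) ->
  forall g g', exists x, B x /\ x <> g /\ x <> g'.
Proof.
  intros B [a [b [c h]]] g g'.
  destruct (classic (a = g)); destruct (classic (a = g')).
  - subst. exists b. intuition.
  - subst. destruct (classic (b = g')).
    + subst. exists c. intuition.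
    + exists b. intuition.
  - subst. destruct (classic (b = g)).
    + subst. exists c. intuition.
    + exists b. intuition.
  - exists a. intuition.
Qed.

Lemma B3 : forall B v, prime_on R B -> ~ B v ->
  prime_on R (addv B v) \/ in_angle R B v \/ exists g, B g /\ in_Xalpha R B g v.
Proof.
  intros B v hB hv.
  destruct (classic (prime_on R (addv B v))) as [hp|hn]; [left; exact hp|right].
  destruct (not_prime_mod (addv B v)) as [M [hM hnt]]; auto.
  { apply (three_sub B). unfold addv; tauto. apply hB. }
  destruct (triv_inter B (addv B v) M hB hM) as [h|[h|[g [hg [hMg hu]]]]].
  - unfold addv; tauto.
  - exfalso. apply hnt. destruct (classic (M v)) as [mv|nmv].
    + right; right. exists v. intro x; split.
      * intro hx. destruct (proj1 hM x hx) as [bx|ex]; auto. exfalso; apply (h x bx hx).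
      * intro e; subst; auto.
    + left. intros x hx. destruct (proj1 hM x hx) as [bx|ex]. apply (h x bx hx). subst; auto.
  - destruct (classic (M v)) as [mv|nmv].
    + exfalso. apply hnt. right; left. intro x; split.
      * apply hM.
      * intros [bx|ex]; [apply h; auto| subst; auto].
    + left. split; auto. apply (mod_restr2 (addv B v) (addv B v) M B hM); auto.
      * intros x hx. split; auto. intro mx. destruct (proj1 hM x mx) as [bx|ex]; auto. subst; tauto.
      * unfold addv; tauto.
  - destruct (classic (M v)) as [mv|nmv].
    + right. exists g. split; auto. split; auto.
      apply (mod_restr2 (addv B v) (addv B v) M); auto.
      * intros x hx; split.
        -- intro mx. destruct (proj1 hM x mx) as [bx|ex]; auto.
        -- intros [e|e]; subst; auto.
      * unfold addv; intros x [e|e]; subst; auto.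
    + exfalso. apply hnt. right; right. exists g. intro x; split.
      * intro mx. destruct (proj1 hM x mx) as [bx|ex]; auto. subst; tauto.
      * intro e; subst; auto.
Qed.

Lemma PU1 : forall B v g, prime_on R B -> in_angle R B v -> B g -> in_Xalpha R B g v -> False.
Proof.
  intros B v g hB [hv [_ hA]] hg [_ [_ hX]].
  destruct (two_others B (proj1 hB) g) as [a [b [ha [hb [hab [hag hbg]]]]]].
  apply (prime_contra B (fun x => B x /\ x <> g) a b g hB); auto.
  - apply mod_rep. tauto.
    intros w hw hnw. assert (w = g) by (apply NNPP; intro; apply hnw; auto). subst w.
    exists a. intros m [hm hmg].
    assert (vm : v <> m) by (intro; subst; tauto).
    assert (va : v <> a) by (intro; subst; tauto).
    destruct (hX g v m) as [x1 x2]; unfold addv; auto. intros [e|e]; auto.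
    destruct (hX g v a) as [y1 y2]; unfold addv; auto. intros [e|e]; auto.
    destruct (hA m a v) as [z1 z2]; unfold addv; auto.
    split.
    + eapply Rtr; [exact x2|]. eapply Rtr; [exact z1|]. apply Rsym, y2.
    + eapply Rtr; [exact x1|]. eapply Rtr; [exact z2|]. apply Rsym, y1.
  - tauto.
Qed.

Lemma PU2 : forall B v g g', prime_on R B -> B g -> B g' -> g <> g' ->
  in_Xalpha R B g v -> in_Xalpha R B g' v -> False.
Proof.
  intros B v g g' hB hg hg' ne [hv [_ h1]] [_ [_ h2]].
  destruct (one_other B (proj1 hB) g g') as [c [hc [hcg hcg']]].
  apply (prime_contra B (fun x => x = g \/ x = g') g g' c hB); auto.
  - apply mod_rep. intros x [e|e]; subst; auto.
    intros w hw hnw. exists v. intros m [e|e]; subst.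
    + assert (w <> v) by (intro; subst; tauto).
      destruct (h1 g v w) as [a1 a2]; unfold addv; auto. intros [e|e]; subst; tauto.
    + assert (w <> v) by (intro; subst; tauto).
      destruct (h2 g' v w) as [a1 a2]; unfold addv; auto. intros [e|e]; subst; tauto.
  - intros [e|e]; auto.
Qed.

Lemma PU3a : forall B v, prime_on R B -> prime_on R (addv B v) -> in_angle R B v -> False.
Proof.
  intros B v hB hp [hv [_ hA]].
  destruct (two_others B (proj1 hB) v) as [a [b [ha [hb [hab _]]]]].
  apply (prime_contra (addv B v) B a b v hp); auto. split; auto. unfold addv; tauto.
  unfold addv; auto.
Qed.

Lemma PU3b : forall B v g, prime_on R B -> prime_on R (addv B v) -> B g -> in_Xalpha R B g v -> False.
Proof.
  intros B v g hB hp hg [hv [hM hX]].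
  destruct (one_other B (proj1 hB) g g) as [c [hc [hcg _]]].
  apply (prime_contra (addv B v) (fun u => u = g \/ u = v) g v c hp); auto.
  split; auto. intro; subst; tauto. unfold addv; auto. intros [e|e]; subst; tauto.
Qed.


Lemma TS : forall W a c, ~ W a -> ~ W c -> a <> c ->
  (forall o, W o -> R (o,a) (o,c) /\ R (a,o) (c,o)) ->
  prime_on R (addv W a) -> prime_on R (addv W c).
Proof.
  intros W a c hWa hWc hac htw [h3 hp]. split.
  - destruct (two_others (addv W a) h3 a) as [x [y [hx [hy [hxy [hxa hya]]]]]].
    exists x, y, c. unfold addv in *. destruct hx as [hx|hx]; [|tauto].
    destruct hy as [hy|hy]; [|tauto]. repeat split; auto; intro; subst; tauto.
  - intros M hM.
    set (M' := fun x => (M x /\ x <> c) \/ (x = a /\ M c)).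
    assert (hinW : forall x, M x -> x <> c -> W x).
    { intros x mx nx. destruct (proj1 hM x mx) as [h|h]; tauto. }
    assert (hrep : forall x v, M' x -> W v -> ~ M v ->
      exists x', M x' /\ R (x,v) (x',v) /\ R (v,x) (v,x')).
    { intros x v [[mx nx]|[ex mc]] wv nmv.
      - exists x. assert (x <> v) by (intro; subst; tauto).
        split; auto; split; apply Rrefl; auto.
      - subst x. exists c. destruct (htw v wv) as [t1 t2]. split; auto. }
    assert (hM' : is_module R (addv W a) M').
    { split.
      - intros x [[mx nx]|[ex mc]]; unfold addv; auto.
      - intros x y v hx hy hv hnv. destruct hv as [wv|ev].
        + assert (nmv : ~ M v).
          { intro mv. apply hnv. left. split; auto. intro; subst; tauto. }
          destruct (hrep x v hx wv nmv) as [x' [mx' [r1 r2]]].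
          destruct (hrep y v hy wv nmv) as [y' [my' [s1 s2]]].
          destruct (proj2 hM x' y' v mx' my') as [t1 t2]; unfold addv; auto.
          split; eapply Rtr; eauto; eapply Rtr; eauto; apply Rsym; auto.
        + subst v. assert (nmc : ~ M c) by (intro mc; apply hnv; right; auto).
          assert (hx' : M x /\ W x).
          { destruct hx as [[mx nx]|[ex mc]]; [|subst; tauto]. split; auto. }
          assert (hy' : M y /\ W y).
          { destruct hy as [[my ny]|[ey mc]]; [|subst; tauto]. split; auto. }
          destruct (htw x (proj2 hx')) as [a1 a2].
          destruct (htw y (proj2 hy')) as [b1 b2].
          destruct (proj2 hM x y c (proj1 hx') (proj1 hy')) as [t1 t2]; unfold addv; auto.
          split.
          * eapply Rtr; [exact a1|]. eapply Rtr; [exact t1|]. apply Rsym; auto.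
          * eapply Rtr; [exact a2|]. eapply Rtr; [exact t2|]. apply Rsym; auto. }
    destruct (hp M' hM') as [h|[h|[d h]]].
    + left. intros x mx. destruct (classic (x = c)).
      * subst. apply (h a). right; auto.
      * apply (h x). left; auto.
    + right; left. intro x; split; [apply hM|]. intros [wx|ex].
      * destruct (proj2 (h x) (or_introl wx)) as [[mx _]|[ex _]]; auto. subst; tauto.
      * subst. destruct (proj2 (h a) (or_intror eq_refl)) as [[ma _]|[_ mc]]; auto.
        destruct (proj1 hM a ma) as [wa|ea]; tauto.
    + right; right. destruct (classic (M c)) as [mc|nmc].
      * exists c. intro x; split; [|intro; subst; auto].
        intro mx. apply NNPP. intro nx.
        assert (e : x = d) by (apply h; left; auto).
        assert (e2 : a = d) by (apply h; right; auto).
        subst. apply hWa. apply hinW; auto.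
      * exists d. intro x; split.
        -- intro mx. apply h. left. split; auto. intro; subst; tauto.
        -- intro e. destruct (proj2 (h x) e) as [[mx _]|[_ mc]]; tauto.
Qed.

Lemma SL : forall B p o a b, B a -> B b -> a <> b ->
  in_Xalpha R B a p -> in_Xalpha R B b o -> nd p b o -> nd o a p.
Proof.
  intros B p o a b ha hb hab [hp [_ hXp]] [ho [_ hXo]] [n1 n2].
  destruct (hXo b o a) as [o1 o2]; unfold addv; auto.
  { intros [e|e]; subst; tauto. }
  destruct (hXp a p b) as [p1 p2]; unfold addv; auto.
  { intros [e|e]; subst; tauto. }
  split.
  - eapply Rtr; [apply Rsym, o1|]. eapply Rtr; [exact p2|]. exact n2.
  - eapply Rtr; [apply Rsym, o2|]. eapply Rtr; [exact p1|]. exact n1.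
Qed.


Lemma restr_set : forall W W' M (S : T -> Prop), is_module R W M -> (forall x, W' x -> W x) ->
  (forall x, S x -> W' x) -> (forall x, S x -> M x) -> (forall x, W' x -> M x -> S x) ->
  is_module R W' S.
Proof.
  intros W W' M S hM h1 h2 h3 h4. apply (mod_restr2 W W' M S hM h1); auto.
  intros x hx; split; auto.
Qed.

Ltac sets := unfold addv, U2 in *; intros; repeat match goal with
  | H : _ \/ _ |- _ => destruct H
  | H : _ /\ _ |- _ => destruct H end; subst; auto; try tauto.

Lemma NPL : forall B p o, prime_on R B -> ~ B p -> ~ B o -> p <> o ->
  ~ prime_on R (U2 B p o) ->
  (in_angle R B p /\ in_angle R B o) \/
  (in_angle R B o /\ forall y, B y -> R (p,o) (y,o) /\ R (o,p) (o,y)) \/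
  (in_angle R B p /\ forall y, B y -> R (o,p) (y,p) /\ R (p,o) (p,y)) \/
  (exists g, B g /\ in_Xalpha R B g p /\ nd o g p) \/
  (exists g, B g /\ in_Xalpha R B g o /\ nd p g o) \/
  (exists g, B g /\ in_Xalpha R B g p /\ in_Xalpha R B g o) \/
  tw B p o.
Proof.
  intros B p o hB hp ho hpo hn.
  destruct (not_prime_mod (U2 B p o)) as [M [hM hnt]]; auto.
  { apply (three_sub B). unfold U2; tauto. apply hB. }
  assert (hsub : forall x, M x -> B x \/ x = p \/ x = o) by apply hM.
  assert (op : o <> p) by auto.
  destruct (triv_inter B (U2 B p o) M hB hM) as [h|[h|[g [hg [hMg hu]]]]].
  { unfold U2; tauto. }
  -
    destruct (classic (M p)) as [mp|nmp]; destruct (classic (M o)) as [mo|nmo].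
    + right; right; right; right; right; right. intros y hy.
      assert (~ M y) by (apply h; auto).
      destruct (proj2 hM p o y mp mo) as [t1 t2]; unfold U2; auto.
    + exfalso. apply hnt. right; right. exists p. intro x; split; [|intro; subst; auto].
      intro mx. destruct (hsub x mx) as [bx|[e|e]]; auto. exfalso; apply (h x); auto. subst; tauto.
    + exfalso. apply hnt. right; right. exists o. intro x; split; [|intro; subst; auto].
      intro mx. destruct (hsub x mx) as [bx|[e|e]]; auto. exfalso; apply (h x); auto. subst; tauto.
    + exfalso. apply hnt. left. intros x mx. destruct (hsub x mx) as [bx|[e|e]]; subst; auto.
      apply (h x); auto.
  - destruct (classic (M p)) as [mp|nmp]; destruct (classic (M o)) as [mo|nmo].
    + exfalso. apply hnt. right; left. intro x; split; [apply hM|]. intros [bx|[e|e]]; subst; auto.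
    + right; left. split.
      * split; auto. apply (restr_set (U2 B p o) (addv B o) M); auto; sets.
      * intros y hy. assert (y <> o) by (intro; subst; tauto).
        destruct (proj2 hM p y o mp (h y hy)) as [t1 t2]; unfold U2; auto.
    + right; right; left. split.
      * split; auto. apply (restr_set (U2 B p o) (addv B p) M); auto; sets.
      * intros y hy.
        destruct (proj2 hM o y p mo (h y hy)) as [t1 t2]; unfold U2; auto.
    + left. split.
      * split; auto. apply (restr_set (U2 B p o) (addv B p) M); auto; sets.
      * split; auto. apply (restr_set (U2 B p o) (addv B o) M); auto; sets.
  - assert (gp : g <> p) by (intro; subst; tauto).
    assert (go : g <> o) by (intro; subst; tauto).
    destruct (classic (M p)) as [mp|nmp]; destruct (classic (M o)) as [mo|nmo].
    + right; right; right; right; right; left. exists g. split; auto. split.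
      * split; [auto|]. apply (restr_set (U2 B p o) (addv B p) M); auto; sets.
      * split; [auto|]. apply (restr_set (U2 B p o) (addv B o) M); auto; sets.
    + right; right; right; left. exists g. split; auto. split.
      * split; [auto|]. apply (restr_set (U2 B p o) (addv B p) M); auto; sets.
      * destruct (proj2 hM g p o hMg mp) as [t1 t2]; unfold U2; auto. split; auto.
    + right; right; right; right; left. exists g. split; auto. split.
      * split; [auto|]. apply (restr_set (U2 B p o) (addv B o) M); auto; sets.
      * destruct (proj2 hM g o p hMg mo) as [t1 t2]; unfold U2; auto. split; auto.
    + exfalso. apply hnt. right; right. exists g. intro x; split; [|intro; subst; auto].
      intro mx. destruct (hsub x mx) as [bx|[e|e]]; subst; auto; tauto.
Qed.


Lemma angle_tw : forall B o m, in_angle R B o -> tw B o m -> ~ B m -> in_angle R B m.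
Proof.
  intros B o m [ho [_ hA]] htw hm. split; auto. split.
  - unfold addv; auto.
  - intros x y v hx hy hv hnv. assert (v = m) by (destruct hv; tauto). subst v.
    destruct (htw x hx) as [a1 a2]. destruct (htw y hy) as [b1 b2].
    destruct (hA x y o) as [c1 c2]; unfold addv; auto.
    split; eapply Rtr; [apply Rsym, a1| |apply Rsym, a2|]; eapply Rtr; eauto.
Qed.

Lemma Xa_tw : forall B g m o, B g -> in_Xalpha R B g m -> tw B m o -> ~ B o -> in_Xalpha R B g o.
Proof.
  intros B g m o hg [hm [_ hX]] htw ho. split; auto. split.
  - unfold addv; intros x [e|e]; subst; auto.
  - intros x y v hx hy hv hnv. assert (hv' : B v) by (destruct hv; [auto| subst; tauto]).
    assert (vg : v <> g) by tauto.
    assert (vm : v <> m) by (intro; subst; tauto).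
    destruct (htw v hv') as [t1 t2].
    destruct (hX g m v) as [c1 c2]; unfold addv; auto. intros [e|e]; tauto.
    destruct hx as [ex|ex]; destruct hy as [ey|ey]; subst.
    + split; apply Rrefl; auto.
    + split; eapply Rtr; eauto.
    + split; apply Rsym; eapply Rtr; eauto.
    + split; apply Rrefl; auto; intro; subst; tauto.
Qed.

Lemma tw_sym : forall B a b, tw B a b -> tw B b a.
Proof. intros B a b h x hx. destruct (h x hx). split; apply Rsym; auto. Qed.

Lemma tw_trans : forall B a b c, tw B a b -> tw B b c -> tw B a c.
Proof. intros B a b c h1 h2 x hx. destruct (h1 x hx), (h2 x hx). split; eapply Rtr; eauto. Qed.

Lemma ext_tw : forall B p o, ~ B p -> ~ B o -> p <> o -> tw B o p ->
  prime_on R (addv B p) -> prime_on R (addv B o).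
Proof.
  intros B p o hp ho ne htw hpr. apply (TS B p o); auto.
  intros x hx. destruct (htw x hx). split; apply Rsym; auto.
Qed.

Section ERs.
Hypothesis Hsig : prime_on R (fun _ => True).

Lemma ER : forall B a0 b0, prime_on R B -> ~ B a0 -> ~ B b0 -> a0 <> b0 ->
  exists a b, ~ B a /\ ~ B b /\ a <> b /\ prime_on R (U2 B a b).
Proof.
  intros B a0 b0 hB ha0 hb0 hab0. apply NNPP. intro hno.
  assert (H : forall a b, ~ B a -> ~ B b -> a <> b -> ~ prime_on R (U2 B a b)).
  { intros a b ha hb ne hp. apply hno. exists a, b. auto. }
  clear hno.
  destruct (proj1 hB) as [y0 [y1 [y2 [hy0 [hy1 [hy2 [n01 [n02 n12]]]]]]]].
  assert (ext_see : forall p o, ~ B p -> prime_on R (addv B p) -> ~ B o -> ~ prime_on R (addv B o) ->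
     o <> p ->
     (in_angle R B o /\ forall y, B y -> R (p,o) (y,o) /\ R (o,p) (o,y)) \/
     (exists g, B g /\ in_Xalpha R B g o /\ nd p g o)).
  { intros p o hp hpe ho hoe nop.
    destruct (NPL B o p hB ho hp nop (H o p ho hp nop)) as
      [[_ h]|[[h _]|[h|[[g [hg [h1 h2]]]|[h|[[g [hg [_ h]]]|h]]]]]].
    - exfalso; apply (PU3a B p hB hpe h).
    - exfalso; apply (PU3a B p hB hpe h).
    - left; exact h.
    - right. exists g. auto.
    - exfalso. destruct h as [g [hg [h _]]]. apply (PU3b B p g hB hpe hg h).
    - exfalso; apply (PU3b B p g hB hpe hg h).
    - exfalso. apply hoe. apply (ext_tw B p o); auto. }
  assert (ext_tw2 : forall p q, ~ B p -> prime_on R (addv B p) -> ~ B q -> prime_on R (addv B q) ->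
     p <> q -> tw B p q).
  { intros p q hp hpe hq hqe ne.
    destruct (NPL B p q hB hp hq ne (H p q hp hq ne)) as
      [[h _]|[[h _]|[[h _]|[[g [hg [h _]]]|[[g [hg [h _]]]|[[g [hg [h _]]]|h]]]]]].
    - exfalso; apply (PU3a B p hB hpe h).
    - exfalso; apply (PU3a B q hB hqe h).
    - exfalso; apply (PU3a B p hB hpe h).
    - exfalso; apply (PU3b B p g hB hpe hg h).
    - exfalso; apply (PU3b B q g hB hqe hg h).
    - exfalso; apply (PU3b B p g hB hpe hg h).
    - exact h. }
  assert (stepa : forall u u', ~ B u -> prime_on R (addv B u) -> ~ B u' -> prime_on R (addv B u') -> u = u').
  { intros u u' hu hue hu' hue'. apply NNPP. intro ne.
    apply (prime_contra (fun _ => True) (fun v => ~ B v /\ prime_on R (addv B v)) u u' y0 Hsig); auto.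
    2: tauto.
    split; auto.
    intros p q o [hp hpe] [hq hqe] _ hno.
    destruct (classic (p = q)) as [e|npq].
    { subst q. assert (p <> o) by (intro; subst; tauto). split; apply Rrefl; auto. }
    assert (htw := ext_tw2 p q hp hpe hq hqe npq).
    destruct (classic (B o)) as [bo|nbo].
    - destruct (htw o bo). split; auto.
    - assert (hoe : ~ prime_on R (addv B o)) by tauto.
      assert (op : o <> p) by (intro; subst; tauto).
      assert (oq : o <> q) by (intro; subst; tauto).
      destruct (ext_see p o hp hpe nbo hoe op) as [[ang hp1]|[g [hg [xg hn1]]]];
      destruct (ext_see q o hq hqe nbo hoe oq) as [[ang' hq1]|[g' [hg' [xg' hn2]]]].
      + destruct (hp1 y0 hy0) as [a1 a2]. destruct (hq1 y0 hy0) as [b1 b2].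
        split; eapply Rtr; eauto; apply Rsym; auto.
      + exfalso; apply (PU1 B o g' hB ang hg' xg').
      + exfalso; apply (PU1 B o g hB ang' hg xg).
      + assert (g = g') by (apply NNPP; intro; apply (PU2 B o g g'); auto). subst g'.
        destruct hn1 as [c1 c2]. destruct hn2 as [d1 d2]. destruct (htw g hg) as [t1 t2].
        split.
        * eapply Rtr; [apply Rsym, c1|]. eapply Rtr; [exact t2|]. exact d1.
        * eapply Rtr; [apply Rsym, c2|]. eapply Rtr; [exact t1|]. exact d2. }
  assert (stepb : forall w, ~ in_angle R B w).
  { intros w0 hw0.
    apply (prime_contra (fun _ => True) (fun m => ~ in_angle R B m) y0 y1 w0 Hsig); auto.
    all: try (intros [h _]; tauto).
    apply mod_rep; auto. intros o _ hno. assert (ho : in_angle R B o) by (apply NNPP; auto).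
    assert (nbo : ~ B o) by apply ho.
    exists y0. intros m hm.
    destruct (classic (B m)) as [bm|nbm].
    - destruct ho as [_ [_ hA]]. apply hA; unfold addv; auto.
    - assert (mo : o <> m) by (intro; subst; tauto).
      destruct (NPL B o m hB nbo nbm mo (H o m nbo nbm mo)) as
        [[_ h]|[[h _]|[[_ h]|[[g [hg [h _]]]|[[g [hg [h hn]]]|[[g [hg [h _]]]|h]]]]]].
      + tauto.
      + tauto.
      + apply h; auto.
      + exfalso; apply (PU1 B o g hB ho hg h).
      + destruct hn as [c1 c2]. destruct ho as [_ [_ hA]].
        destruct (hA g y0 o) as [d1 d2]; unfold addv; auto.
        split; eapply Rtr; [apply Rsym, c2| exact d1 | apply Rsym, c1 | exact d2].
      + exfalso; apply (PU1 B o g hB ho hg h).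
      + exfalso. apply hm. apply (angle_tw B o m); auto. }
  assert (stepc : forall g z, B g -> ~ in_Xalpha R B g z).
  { intros g z0 hg hz0.
    destruct (one_other B (proj1 hB) g g) as [c [hc [hcg _]]].
    assert (z0g : z0 <> g) by (intro; subst; destruct hz0; tauto).
    apply (prime_contra (fun _ => True) (fun m => m = g \/ in_Xalpha R B g m) g z0 c Hsig); auto.
    all: try (intros [e|h]; [tauto| destruct h; tauto]).
    apply mod_rep; auto. intros o _ hno.
    assert (og : o <> g) by tauto.
    assert (nxo : ~ in_Xalpha R B g o) by tauto.
    exists g. intros m [em|hm].
    { subst. split; apply Rrefl; auto. }
    assert (nbm : ~ B m) by apply hm.
    assert (mo : m <> o) by (intro; subst; tauto).
    destruct (classic (B o)) as [bo|nbo].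
    - destruct hm as [_ [_ hX]]. destruct (hX g m o) as [c1 c2]; unfold addv; auto.
      intros [e|e]; subst; tauto.
      split; apply Rsym; auto.
    - destruct (NPL B m o hB nbm nbo mo (H m o nbm nbo mo)) as
        [[h _]|[[_ h]|[[h _]|[[g' [hg' [h hn]]]|[[g' [hg' [h hn]]]|[[g' [hg' [h1 h2]]]|h]]]]]].
      + exfalso; apply (PU1 B m g hB h hg hm).
      + apply h; auto.
      + exfalso; apply (PU1 B m g hB h hg hm).
      + assert (g = g') by (apply NNPP; intro; apply (PU2 B m g g'); auto). subst g'.
        destruct hn. split; apply Rsym; auto.
      + destruct (classic (g = g')) as [e|ne].
        * subst g'. tauto.
        * destruct (SL B m o g g' hg hg' ne hm h hn). split; apply Rsym; auto.
      + destruct (classic (g = g')) as [e|ne].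
        * subst g'. tauto.
        * exfalso. apply (PU2 B m g g'); auto.
      + exfalso. apply nxo. apply (Xa_tw B g m o); auto. }
  destruct (B3 B a0 hB ha0) as [e1|[e1|[g1 [hg1 e1]]]].
  - destruct (B3 B b0 hB hb0) as [e2|[e2|[g2 [hg2 e2]]]].
    + apply hab0. apply stepa; auto.
    + apply (stepb b0 e2).
    + apply (stepc g2 b0 hg2 e2).
  - apply (stepb a0 e1).
  - apply (stepc g1 a0 hg1 e1).
Qed.

End ERs.

Lemma class_eq : forall e p q, is_class R e -> e p -> (e q <-> R p q).
Proof.
  intros e p q [p0 [_ he]] hp. rewrite he. rewrite he in hp. split; intro h.
  - eapply Rtr; [apply Rsym, hp|exact h].
  - eapply Rtr; eauto.
Qed.

Lemma restr_contra : forall W W' M a b c, is_module R W M -> (forall x, W' x -> W x) ->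
  prime_on R W' -> M a -> M b -> a <> b -> W' a -> W' b -> W' c -> ~ M c -> False.
Proof.
  intros W W' M a b c hM hs hp ha hb hab wa wb wc hc.
  apply (prime_contra W' (fun x => M x /\ W' x) a b c hp); auto.
  - apply (mod_restrict W); auto.
  - tauto.
Qed.

Section WW.
Hypothesis Hsig : prime_on R (fun _ => True).
Variable X : T -> Prop.
Hypothesis HX : prime_on R X.
Hypothesis NoExt : forall v, ~ X v -> ~ prime_on R (addv X v).
Hypothesis HW : forall a b c, ~ X a -> ~ X b -> a <> b -> prime_on R (U2 X a b) ->
  ~ X c -> c <> a -> c <> b -> ~ prime_on R (addv (U2 X a b) c).

Definition adj a b := ~ X a /\ ~ X b /\ a <> b /\ prime_on R (U2 X a b).

Lemma mk_adj : forall a b, ~ X a -> ~ X b -> a <> b -> prime_on R (U2 X a b) -> adj a b.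
Proof. intros a b h1 h2 h3 h4. split; [exact h1|split; [exact h2|split; [exact h3|exact h4]]]. Qed.

Lemma adj_sym : forall a b, adj a b -> adj b a.
Proof.
  intros a b [h1 [h2 [h3 h4]]]. split; [auto|split; [auto|split; [auto|]]].
  apply (prime_ext (U2 X a b)); auto. unfold U2; intro; tauto.
Qed.

Lemma x0ex : exists x, X x.
Proof. destruct (proj1 HX) as [a [b [c h]]]. exists a; tauto. Qed.

Lemma tw_not_adj : forall a b, tw X a b -> ~ adj a b.
Proof.
  intros a b htw [ha [hb [hab hp]]].
  destruct x0ex as [x hx].
  apply (prime_contra (U2 X a b) (fun z => z = a \/ z = b) a b x hp).
  - apply mod_rep. unfold U2; intros z [e|e]; auto.
    intros v hv hnv. exists b. intros m [e|e]; subst.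
    + assert (hv' : X v) by (destruct hv as [h|[h|h]]; auto; tauto).
      destruct (htw v hv') as [q1 q2]. split; assumption.
    + assert (v <> b) by tauto. split; apply Rrefl; auto.
  - left; reflexivity.
  - right; reflexivity.
  - exact hab.
  - left; exact hx.
  - intros [e|e]; subst; tauto.
Qed.

Lemma W1 : forall a b c, adj a b -> adj c b -> c <> a -> in_Xalpha R (U2 X a b) a c.
Proof.
  intros a b c hab hcb hca.
  destruct hab as [ha [hb [nab pab]]]. destruct hcb as [hc [_ [ncb pcb]]].
  assert (hnP : ~ U2 X a b c) by (unfold U2; tauto).
  destruct x0ex as [x0 hx0].
  destruct (B3 (U2 X a b) c pab hnP) as [h|[h|[g [hg h]]]].
  - exfalso. apply (HW a b c); auto.
  - exfalso. destruct h as [_ hA].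
    destruct (two_others X (proj1 HX) c) as [x [y [hx [hy [hxy _]]]]].
    apply (restr_contra (addv (U2 X a b) c) (U2 X c b) (U2 X a b) x y c hA); auto.
    + unfold addv, U2; tauto.
    + unfold U2; auto.
    + unfold U2; auto.
    + unfold U2; auto.
    + unfold U2; auto.
    + unfold U2; tauto.
  - destruct hg as [hg|[e|e]].
    + exfalso. destruct h as [_ hA].
      destruct (one_other X (proj1 HX) g g) as [x [hx [hxg _]]].
      apply (restr_contra (addv (U2 X a b) c) (U2 X c b) (fun u => u = g \/ u = c) g c x hA); auto.
      * unfold addv, U2; tauto.
      * intro; subst; tauto.
      * unfold U2; auto.
      * unfold U2; auto.
      * unfold U2; auto.
      * intros [e|e]; subst; tauto.
    + subst g. exact h.
    + exfalso. subst g. destruct h as [_ hA].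
      apply (restr_contra (addv (U2 X a b) c) (U2 X c b) (fun u => u = b \/ u = c) b c x0 hA); auto.
      * unfold addv, U2; tauto.
      * unfold U2; auto.
      * unfold U2; auto.
      * unfold U2; auto.
      * intros [e|e]; subst; tauto.
Qed.

Lemma W1tw : forall a b c, adj a b -> adj c b -> c <> a -> tw X a c /\ nd b a c.
Proof.
  intros a b c hab hcb hca. assert (h := W1 a b c hab hcb hca).
  destruct h as [hc [_ hX]].
  destruct hab as [ha [hb [nab pab]]]. destruct hcb as [_ [_ [ncb _]]].
  split.
  - intros x hx.
    assert (hh : R (a,x) (c,x) /\ R (x,a) (x,c)).
    { apply hX; unfold addv, U2 in *; auto. intros [e|e]; subst; tauto. }
    destruct hh. split; auto.
  - assert (hh : R (a,b) (c,b) /\ R (b,a) (b,c)).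
    { apply hX; unfold addv, U2 in *; auto. intros [e|e]; subst; tauto. }
    destruct hh. split; auto.
Qed.

Lemma GP : forall p w o, adj p w -> ~ X o -> o <> p -> o <> w -> ~ adj o p -> ~ adj o w ->
  in_angle R (U2 X p w) o \/ exists g, X g /\ in_Xalpha R (U2 X p w) g o.
Proof.
  intros p w o hpw ho nop now nap naw.
  destruct hpw as [hp [hw [npw ppw]]].
  assert (hnP : ~ U2 X p w o) by (unfold U2; tauto).
  destruct (B3 (U2 X p w) o ppw hnP) as [h|[h|[g [hg h]]]].
  - exfalso. apply (HW p w o); auto.
  - left; exact h.
  - destruct hg as [hg|[e|e]].
    + right. exists g. auto.
    + exfalso. subst g. apply naw. destruct h as [_ [_ hA]].
      split; [auto|split; [auto|split; [auto|]]].
      apply (prime_ext (addv (fun z => X z \/ z = w) o)). unfold addv, U2; intro; tauto.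
      apply (TS (fun z => X z \/ z = w) p o).
      * tauto.
      * tauto.
      * auto.
      * intros z hz.
        assert (hh : R (p,z) (o,z) /\ R (z,p) (z,o)).
        { apply hA; unfold addv, U2 in *; try tauto; intros [e|e]; subst; intuition congruence. }
        destruct hh; split; auto.
      * apply (prime_ext (U2 X p w)); auto. unfold addv, U2; intro; tauto.
    + exfalso. subst g. apply nap. destruct h as [_ [_ hA]].
      split; [auto|split; [auto|split; [auto|]]].
      apply (prime_ext (addv (fun z => X z \/ z = p) o)). unfold addv, U2; intro; tauto.
      apply (TS (fun z => X z \/ z = p) w o).
      * intros [hh|hh]; [tauto|subst; tauto].
      * intros [hh|hh]; [tauto|subst; tauto].
      * auto.
      * intros z hz.
        assert (hh : R (w,z) (o,z) /\ R (z,w) (z,o)).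
        { apply hA; unfold addv, U2 in *; try tauto; intros [e|e]; subst; intuition congruence. }
        destruct hh; split; auto.
      * apply (prime_ext (U2 X p w)); auto. unfold addv, U2; intro; tauto.
Qed.


Lemma GPsee : forall p w o, adj p w -> ~ X o -> o <> p -> o <> w -> ~ adj o p -> ~ adj o w ->
  (in_angle R X o /\ forall x, X x -> R (p,o) (x,o) /\ R (o,p) (o,x)) \/
  (exists g, X g /\ in_Xalpha R X g o /\ nd p g o).
Proof.
  intros p w o hpw ho nop now nap naw.
  assert (hp : ~ X p) by apply hpw. assert (hw : ~ X w) by apply hpw.
  assert (npw : p <> w) by apply hpw.
  destruct (GP p w o hpw ho nop now nap naw) as [[_ hA]|[g [hg [_ hA]]]].
  - left. split.
    + split; auto. apply (restr_set (addv (U2 X p w) o) (addv X o) (U2 X p w)); auto.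
      * unfold addv, U2; intros; tauto.
      * unfold addv; tauto.
      * unfold U2; tauto.
      * unfold addv, U2; intros x [h|h] [h'|[h'|h']]; subst; tauto.
    + intros x hx. apply hA; unfold addv, U2; auto. tauto.
  - right. exists g. split; auto. split.
    + split; auto. apply (restr_set (addv (U2 X p w) o) (addv X o) (fun u => u = g \/ u = o)); auto.
      * unfold addv, U2; intros; tauto.
      * unfold addv; intros x [e|e]; subst; auto.
    + assert (hh : R (g,p) (o,p) /\ R (p,g) (p,o)).
      { apply hA; unfold addv, U2; auto. intros [e|e]; subst; intuition congruence. }
      destruct hh; split; auto.
Qed.

Lemma see_comb1 : forall p q o, tw X p q -> ~ X o ->
  ((in_angle R X o /\ forall x, X x -> R (p,o) (x,o) /\ R (o,p) (o,x)) \/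
   (exists g, X g /\ in_Xalpha R X g o /\ nd p g o)) ->
  ((in_angle R X o /\ forall x, X x -> R (q,o) (x,o) /\ R (o,q) (o,x)) \/
   (exists g, X g /\ in_Xalpha R X g o /\ nd q g o)) ->
  R (p,o) (q,o) /\ R (o,p) (o,q).
Proof.
  intros p q o htw ho [[ha hp]|[g [hg [xg hp]]]] [[ha' hq]|[g' [hg' [xg' hq]]]].
  - destruct x0ex as [x hx]. destruct (hp x hx), (hq x hx).
    split; eapply Rtr; eauto; apply Rsym; auto.
  - exfalso; apply (PU1 X o g' HX ha hg' xg').
  - exfalso; apply (PU1 X o g HX ha' hg xg).
  - assert (g = g') by (apply NNPP; intro; apply (PU2 X o g g'); auto). subst g'.
    destruct hp as [a1 a2]. destruct hq as [b1 b2]. destruct (htw g hg) as [t1 t2].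
    split.
    + eapply Rtr; [apply Rsym, a1|]. eapply Rtr; [exact t2|]. exact b1.
    + eapply Rtr; [apply Rsym, a2|]. eapply Rtr; [exact t1|]. exact b2.
Qed.

Lemma see_comb2 : forall p q o, tw X p q -> ~ X p -> ~ X q ->
  ((in_angle R X p /\ forall x, X x -> R (o,p) (x,p) /\ R (p,o) (p,x)) \/
   (exists g, X g /\ in_Xalpha R X g p /\ nd o g p)) ->
  ((in_angle R X q /\ forall x, X x -> R (o,q) (x,q) /\ R (q,o) (q,x)) \/
   (exists g, X g /\ in_Xalpha R X g q /\ nd o g q)) ->
  R (p,o) (q,o) /\ R (o,p) (o,q).
Proof.
  intros p q o htw hp hq [[ha h1]|[g [hg [xg h1]]]] [[ha' h2]|[g' [hg' [xg' h2]]]].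
  - destruct x0ex as [x hx]. destruct (h1 x hx) as [a1 a2]. destruct (h2 x hx) as [b1 b2].
    destruct (htw x hx) as [t1 t2]. split.
    + eapply Rtr; [exact a2|]. eapply Rtr; [exact t2|]. apply Rsym; exact b2.
    + eapply Rtr; [exact a1|]. eapply Rtr; [exact t1|]. apply Rsym; exact b1.
  - exfalso. apply (PU1 X q g' HX); auto. apply (angle_tw X p q); auto.
  - exfalso. apply (PU1 X p g HX); auto. apply (angle_tw X q p); auto. apply tw_sym; auto.
  - assert (xg2 : in_Xalpha R X g q) by (apply (Xa_tw X g p q); auto).
    assert (g = g') by (apply NNPP; intro; apply (PU2 X q g g'); auto). subst g'.
    destruct h1 as [a1 a2]. destruct h2 as [b1 b2]. split.
    + eapply Rtr; [apply Rsym, a2|]. exact b2.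
    + eapply Rtr; [apply Rsym, a1|]. exact b1.
Qed.

Lemma TL : forall y z, ~ X y -> ~ X z -> y <> z -> (forall r, adj r y <-> adj r z) ->
  (exists w, adj w y) -> False.
Proof.
  intros y z hy hz yz hN [w hw].
  destruct x0ex as [x0 hx0].
  assert (hSy : (fun v => ~ X v /\ forall r, adj r v <-> adj r y) y) by (split; auto; intro; tauto).
  assert (hSz : (fun v => ~ X v /\ forall r, adj r v <-> adj r y) z).
  { split; auto. intro r. rewrite hN. tauto. }
  assert (hSx : ~ (fun v => ~ X v /\ forall r, adj r v <-> adj r y) x0) by tauto.
  refine (prime_contra (fun _ => True) _ y z x0 Hsig _ hSy hSz yz I hSx).
  split; auto.
  intros p q o [hp Sp] [hq Sq] _ ho.
  assert (wp : adj w p) by (apply Sp; auto).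
  assert (wq : adj w q) by (apply Sq; auto).
  destruct (classic (p = q)) as [e|npq].
  { subst q. assert (p <> o) by (intro; subst; tauto). split; apply Rrefl; auto. }
  assert (htw : tw X p q) by (apply (W1tw p w q); auto; apply adj_sym; auto).
  destruct (classic (X o)) as [xo|nxo].
  { destruct (htw o xo). split; auto. }
  assert (op : o <> p) by (intro; subst; tauto).
  assert (oq : o <> q) by (intro; subst; tauto).
  destruct (classic (adj o p)) as [aop|naop].
  - assert (aoq : adj o q) by (apply Sq, Sp, aop).
    destruct (W1tw p o q) as [_ [n1 n2]]; auto; try (apply adj_sym; auto).
  - assert (naoq : ~ adj o q) by (intro h; apply naop, Sp, Sq, h).
    destruct (classic (exists w'', adj w'' y /\ ~ adj o w'')) as [[w'' [h1 h2]]|hno].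
    + assert (w''o : o <> w'') by (intro; subst; apply naop, Sp; auto).
      apply see_comb1; auto.
      * apply (GPsee p w''); auto. apply adj_sym, Sp, h1.
      * apply (GPsee q w''); auto. apply adj_sym, Sq, h1.
    + assert (hex : exists r, adj r o /\ ~ adj r y).
      { apply NNPP. intro hn. apply ho. split; auto. intro r. split.
        - intro h. apply NNPP. intro h'. apply hn. exists r. auto.
        - intro h. apply adj_sym. apply NNPP. intro h'. apply hno. exists r. auto. }
      destruct hex as [w' [hw'o hw'y]].
      assert (nw'p : ~ adj w' p) by (intro h; apply hw'y, Sp, h).
      assert (nw'q : ~ adj w' q) by (intro h; apply hw'y, Sq, h).
      assert (pw' : p <> w') by (intro; subst; apply naop, adj_sym; auto).
      assert (qw' : q <> w') by (intro; subst; apply naoq, adj_sym; auto).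
      apply see_comb2; auto.
      * apply (GPsee o w'); auto. apply adj_sym; auto.
        intro h; apply naop, adj_sym, h.
        intro h; apply nw'p, adj_sym, h.
      * apply (GPsee o w'); auto. apply adj_sym; auto.
        intro h; apply naoq, adj_sym, h.
        intro h; apply nw'q, adj_sym, h.
Qed.


Lemma W2 : forall v, ~ X v -> exists w, adj w v.
Proof.
  intros v hv. apply NNPP. intro hn.
  assert (iso : forall r, ~ adj r v) by (intros r h; apply hn; exists r; auto).
  destruct x0ex as [x0 hx0].
  destruct (B3 X v HX hv) as [h|[h|[al [hal h]]]].
  - apply (NoExt v hv h).
  - set (Iso := fun z => in_angle R X z /\ forall r, ~ adj r z).
    destruct (two_others X (proj1 HX) v) as [x [y [hx [hy [hxy _]]]]].
    assert (hIv : Iso v) by (split; auto).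
    refine (prime_contra (fun _ => True) (fun m => ~ Iso m) x y v Hsig _ _ _ hxy I _).
    2: { unfold Iso; intros [[hh _] _]; tauto. }
    2: { unfold Iso; intros [[hh _] _]; tauto. }
    2: { intro hh; apply hh, hIv. }
    apply mod_rep; auto. intros o _ hno. assert (hIo : Iso o) by (apply NNPP; auto).
    destruct hIo as [ango isoo]. assert (nxo : ~ X o) by apply ango.
    exists x0. intros m hm.
    destruct (classic (X m)) as [xm|nxm].
    + destruct ango as [_ [_ hA]]. apply hA; unfold addv; auto.
    + assert (mo : o <> m) by (intro; subst; apply hm; split; auto).
      destruct (classic (exists w, adj w m)) as [[w hw]|hnw].
      * assert (ow : o <> w) by (intro; subst; apply (isoo m), adj_sym; auto).
        assert (n1 : ~ adj o m) by (intro hh; apply (isoo m); apply adj_sym; auto).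
        assert (n2 : ~ adj o w) by (intro hh; apply (isoo w); apply adj_sym; auto).
        destruct (GPsee m w o (adj_sym _ _ hw) nxo mo ow n1 n2) as [[_ hh]|[g [hg [xg _]]]].
        -- apply hh; auto.
        -- exfalso; apply (PU1 X o g HX ango hg xg).
      * assert (npr : ~ prime_on R (U2 X o m)).
        { intro hp. apply (isoo m). apply adj_sym. apply mk_adj; auto. }
        destruct (NPL X o m HX nxo nxm mo npr) as
          [[_ h1]|[[h1 _]|[[_ h1]|[[g [hg [h1 _]]]|[[g [hg [h1 h2]]]|[[g [hg [h1 _]]]|h1]]]]]].
        -- exfalso; apply hm; split; auto. intros r hr; apply hnw; exists r; auto.
        -- exfalso; apply hm; split; auto. intros r hr; apply hnw; exists r; auto.
        -- apply h1; auto.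
        -- exfalso; apply (PU1 X o g HX ango hg h1).
        -- destruct h2 as [c1 c2]. destruct ango as [_ [_ hA]].
           destruct (hA g x0 o) as [d1 d2]; unfold addv; auto.
           split; eapply Rtr; [apply Rsym, c2| exact d1 | apply Rsym, c1 | exact d2].
        -- exfalso; apply (PU1 X o g HX ango hg h1).
        -- exfalso; apply hm; split.
           ++ apply (angle_tw X o m); auto.
           ++ intros r hr; apply hnw; exists r; auto.
  - set (Iso := fun z => in_Xalpha R X al z /\ forall r, ~ adj r z).
    destruct (one_other X (proj1 HX) al al) as [c [hc [hcal _]]].
    assert (hIv : Iso v) by (split; auto).
    assert (val : al <> v) by (intro; subst; tauto).
    refine (prime_contra (fun _ => True) (fun m => m = al \/ Iso m) al v c Hsig _ _ _ val I _).
    2: { left; reflexivity. }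
    2: { right; exact hIv. }
    2: { unfold Iso; intros [e|[[hh _] _]]; [tauto|tauto]. }
    apply mod_rep; auto. intros o _ hno.
    assert (oal : o <> al) by tauto. assert (nIo : ~ Iso o) by tauto.
    exists al. intros m [em|[xm isom]].
    { subst. split; apply Rrefl; auto. }
    assert (nxm : ~ X m) by apply xm.
    destruct (classic (X o)) as [xo|nxo].
    + destruct xm as [_ [_ hX]].
      assert (hh : R (al,o) (m,o) /\ R (o,al) (o,m)).
      { apply hX; unfold addv; auto. intros [e|e]; subst; tauto. }
      destruct hh; split; apply Rsym; auto.
    + assert (mo : m <> o) by (intro; subst; apply nIo; split; auto).
      destruct (classic (exists w, adj w o)) as [[w hw]|hnw].
      * assert (mw : m <> w) by (intro; subst; apply (isom o), adj_sym; auto).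
        assert (n1 : ~ adj m o) by (intro hh; apply (isom o); apply adj_sym; auto).
        assert (n2 : ~ adj m w) by (intro hh; apply (isom w); apply adj_sym; auto).
        destruct (GPsee o w m (adj_sym _ _ hw) nxm mo mw n1 n2) as [[ang _]|[g [hg [xg hn1]]]].
        -- exfalso; apply (PU1 X m al HX ang hal xm).
        -- assert (g = al) by (apply NNPP; intro; apply (PU2 X m g al); auto). subst g.
           destruct hn1. split; apply Rsym; auto.
      * assert (npr : ~ prime_on R (U2 X m o)).
        { intro hp. apply (isom o). apply adj_sym. apply mk_adj; auto. }
        destruct (NPL X m o HX nxm nxo mo npr) as
          [[h1 _]|[[_ h1]|[[h1 _]|[[g [hg [h1 h2]]]|[[g [hg [h1 h2]]]|[[g [hg [h1 h3]]]|h1]]]]]].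
        -- exfalso; apply (PU1 X m al HX h1 hal xm).
        -- apply h1; auto.
        -- exfalso; apply (PU1 X m al HX h1 hal xm).
        -- assert (g = al) by (apply NNPP; intro; apply (PU2 X m g al); auto). subst g.
           destruct h2. split; apply Rsym; auto.
        -- destruct (classic (g = al)) as [e|ne].
           ++ subst g. exfalso; apply nIo. split; auto. intros r hr; apply hnw; exists r; auto.
           ++ destruct (SL X m o al g hal hg (fun e => ne (eq_sym e)) xm h1 h2).
              split; apply Rsym; auto.
        -- assert (g = al) by (apply NNPP; intro; apply (PU2 X m g al); auto). subst g.
           exfalso; apply nIo. split; auto. intros r hr; apply hnw; exists r; auto.
        -- exfalso; apply nIo. split.
           ++ apply (Xa_tw X al m o); auto.
           ++ intros r hr; apply hnw; exists r; auto.
Qed.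


Lemma IPL : forall a b, adj a b ->
  (forall c, ~ X c -> c <> a -> c <> b -> ~ adj c a /\ ~ adj c b) ->
  prime_on R (fun u => u <> a /\ u <> b).
Proof.
  intros a b hab hiso.
  assert (ha : ~ X a) by apply hab. assert (hb : ~ X b) by apply hab.
  assert (hba : adj b a) by (apply adj_sym; auto).
  assert (XS : forall x, X x -> x <> a /\ x <> b).
  { intros x hx; split; intro; subst; tauto. }
  destruct x0ex as [x0 hx0].
  split.
  { apply (three_sub X); auto. apply HX. }
  intros M hM.
  assert (MS : forall m, M m -> m <> a /\ m <> b) by apply hM.
  assert (seeab : forall m z, (z = a \/ z = b) -> ~ X m -> m <> a -> m <> b ->
     (in_angle R X m /\ forall x, X x -> R (z,m) (x,m) /\ R (m,z) (m,x)) \/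
     (exists g, X g /\ in_Xalpha R X g m /\ nd z g m)).
  { intros m z [e|e] hm ma mb; subst z; destruct (hiso m hm ma mb) as [n1 n2].
    - apply (GPsee a b m); auto.
    - apply (GPsee b a m); auto. }
  destruct (triv_inter X (fun u => u <> a /\ u <> b) M HX hM XS) as [h|[h|[g [hg [hMg hu]]]]].
  - destruct (classic (exists p q, M p /\ M q /\ p <> q)) as [[p [q [mp [mq pq]]]]|hno].
    + exfalso.
      refine (prime_contra (fun _ => True) M p q x0 Hsig _ mp mq pq I (h x0 hx0)).
      split; auto. intros p' q' o mp' mq' _ hno.
      destruct (classic (o <> a /\ o <> b)) as [oS|noS].
      * apply hM; auto.
      * assert (oab : o = a \/ o = b) by (apply NNPP; intro; apply noS; split; intro; subst; tauto).
        destruct (classic (p' = q')) as [e|ne].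
        { subst. assert (q' <> o) by (intro; subst; tauto). split; apply Rrefl; auto. }
        assert (htw : tw X p' q').
        { intros x hx. assert (hh := proj2 hM p' q' x mp' mq' (XS x hx) (h x hx)).
          destruct hh; split; auto. }
        assert (np' : ~ X p') by (intro hx; apply (h p' hx mp')).
        assert (nq' : ~ X q') by (intro hx; apply (h q' hx mq')).
        destruct (MS p' mp'), (MS q' mq').
        apply see_comb2; auto.
    + destruct (classic (exists p, M p)) as [[p mp]|hne].
      * right; right. exists p. intro x; split.
        -- intro mx. apply NNPP; intro ne. apply hno. exists x, p. auto.
        -- intro; subst; auto.
      * left. intros x mx. apply hne; exists x; auto.
  - destruct (classic (forall z, z <> a /\ z <> b -> M z)) as [hall|hnall].
    + right; left. intro x; split; auto.
    + exfalso. destruct (not_all_ex_not _ _ hnall) as [c hc].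
      assert (cS : c <> a /\ c <> b) by tauto. assert (nmc : ~ M c) by tauto.
      destruct (two_others X (proj1 HX) a) as [x [y [hx [hy [hxy _]]]]].
      refine (prime_contra (fun _ => True) (fun v => M v \/ v = a \/ v = b) x y c Hsig _
         (or_introl (h x hx)) (or_introl (h y hy)) hxy I _).
      2: { intros [hh|[e|e]]; [tauto|tauto|tauto]. }
      apply mod_rep; auto. intros o _ hno.
      assert (oS : o <> a /\ o <> b) by (split; intro; subst; tauto).
      assert (nmo : ~ M o) by tauto.
      assert (nxo : ~ X o) by (intro hxo; apply nmo, h, hxo).
      assert (ango : in_angle R X o).
      { split; auto. split; [unfold addv; auto|].
        intros x' y' v hx' hy' hv hnv. assert (v = o) by (destruct hv; tauto). subst v.
        apply hM; auto. }
      exists x0. intros m [mm|[e|e]].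
      * apply hM; auto.
      * subst m. destruct (seeab o a (or_introl eq_refl) nxo (proj1 oS) (proj2 oS))
          as [[_ hh]|[g [hg [xg _]]]].
        -- apply hh; auto.
        -- exfalso; apply (PU1 X o g HX ango hg xg).
      * subst m. destruct (seeab o b (or_intror eq_refl) nxo (proj1 oS) (proj2 oS))
          as [[_ hh]|[g [hg [xg _]]]].
        -- apply hh; auto.
        -- exfalso; apply (PU1 X o g HX ango hg xg).
  - destruct (classic (forall z, M z -> z = g)) as [hall|hnall].
    + right; right. exists g. intro x; split; auto. intro; subst; auto.
    + exfalso. destruct (not_all_ex_not _ _ hnall) as [m0 hm0].
      assert (mm0 : M m0) by tauto. assert (m0g : m0 <> g) by tauto.
      destruct (one_other X (proj1 HX) g g) as [c [hc [hcg _]]].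
      refine (prime_contra (fun _ => True) M g m0 c Hsig _ hMg mm0 (fun e => m0g (eq_sym e)) I _).
      2: { intro mc. apply hcg, hu; auto. }
      assert (Xam : forall m, M m -> m <> g -> in_Xalpha R X g m).
      { intros m mm mg. assert (nxm : ~ X m) by (intro hx; apply mg, hu; auto).
        split; auto.
        apply (restr_set (fun u => u <> a /\ u <> b) (addv X m) M); auto.
        - unfold addv; intros x [hx|e]; [apply XS; auto| subst; apply MS; auto].
        - unfold addv; intros x [e|e]; subst; auto.
        - intros x [e|e]; subst; auto.
        - unfold addv; intros x [hx|e] mx; [left; apply hu; auto| right; auto]. }
      apply mod_rep; auto. intros o _ hno.
      exists g. intros m mm.
      destruct (classic (m = g)) as [e|mg].
      { subst. assert (o <> g) by (intro; subst; tauto). split; apply Rrefl; auto. }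
      destruct (classic (o <> a /\ o <> b)) as [oS|noS].
      * apply hM; auto.
      * assert (oab : o = a \/ o = b) by (apply NNPP; intro; apply noS; split; intro; subst; tauto).
        assert (xm := Xam m mm mg). assert (nxm : ~ X m) by apply xm.
        destruct (MS m mm) as [ma mb].
        destruct (seeab m o oab nxm ma mb) as [[ang _]|[g' [hg' [xg' hn]]]].
        -- exfalso; apply (PU1 X m g HX ang hg xm).
        -- assert (g' = g) by (apply NNPP; intro; apply (PU2 X m g' g); auto). subst g'.
           destruct hn. split; apply Rsym; auto.
Qed.


Section YY.
Variable Y : T -> Prop.
Variables e f : T * T -> Prop.
Hypothesis He : is_class R e.
Hypothesis Hf : is_class R f.
Hypothesis Hef : ~ (forall p, e p <-> f p).
Hypothesis HYc : (forall v, Y v <-> in_angle_ef R X e f v) \/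
  (exists al, X al /\ forall v, Y v <-> in_Xalpha_ef R X al e f v).

Lemma ef_contra : forall p, e p -> f p -> False.
Proof.
  intros p hep hfp. apply Hef. intro q. rewrite (class_eq e p q He hep), (class_eq f p q Hf hfp).
  tauto.
Qed.

Lemma e_tr : forall p q, e p -> R p q -> e q.
Proof. intros p q hp hr. apply (class_eq e p q He hp); auto. Qed.
Lemma f_tr : forall p q, f p -> R p q -> f q.
Proof. intros p q hp hr. apply (class_eq f p q Hf hp); auto. Qed.

Lemma Ynx : forall v, Y v -> ~ X v.
Proof.
  intros v hv. destruct HYc as [h|[al [hal h]]]; apply h in hv.
  - apply hv. - apply hv.
Qed.

Lemma Y_tw : forall u c, Y u -> Y c -> tw X u c.
Proof.
  intros u c hu hc x hx. destruct HYc as [h|[al [hal h]]]; apply h in hu; apply h in hc.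
  - destruct hu as [_ hu]. destruct hc as [_ hc].
    destruct (hu x hx) as [e1 f1]. destruct (hc x hx) as [e2 f2]. split.
    + apply (class_eq f (x,u) (x,c) Hf f1); auto.
    + apply (class_eq e (u,x) (c,x) He e1); auto.
  - destruct hu as [[hu [_ hXu]] [e1 f1]]. destruct hc as [[hc [_ hXc]] [e2 f2]].
    destruct (classic (x = al)) as [ex|nx].
    + subst x. split.
      * apply (class_eq f (al,u) (al,c) Hf f1); auto.
      * apply (class_eq e (u,al) (c,al) He e1); auto.
    + assert (hh1 : R (al,x) (u,x) /\ R (x,al) (x,u)).
      { apply hXu; unfold addv; auto. intros [ee|ee]; subst; tauto. }
      assert (hh2 : R (al,x) (c,x) /\ R (x,al) (x,c)).
      { apply hXc; unfold addv; auto. intros [ee|ee]; subst; tauto. }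
      destruct hh1, hh2. split; eapply Rtr; eauto; apply Rsym; eauto.
Qed.

Lemma Y_closed : forall u c, Y u -> ~ X c -> tw X u c -> Y c.
Proof.
  intros u c hu hc htw. destruct HYc as [h|[al [hal h]]]; apply h in hu; apply h.
  - destruct hu as [hang hu]. split.
    + apply (angle_tw X u c); auto.
    + intros x hx. destruct (hu x hx) as [e1 f1]. destruct (htw x hx) as [t1 t2]. split.
      * apply (e_tr (u,x)); auto.
      * apply (f_tr (x,u)); auto.
  - destruct hu as [hxa [e1 f1]]. destruct (htw al hal) as [t1 t2]. split.
    + apply (Xa_tw X al u c); auto.
    + split.
      * apply (e_tr (u,al)); auto.
      * apply (f_tr (al,u)); auto.
Qed.

Lemma E : forall u c s t, Y u -> Y c -> u <> c -> adj s u -> ~ adj s c -> adj t c -> ~ adj t u -> False.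
Proof.
  intros u c s t hu hc uc hsu nsc htc ntu.
  assert (htw := Y_tw u c hu hc).
  assert (nxu := Ynx u hu). assert (nxc := Ynx c hc).
  assert (ncu : ~ adj c u) by (apply tw_not_adj, tw_sym; auto).
  assert (nuc : ~ adj u c) by (apply tw_not_adj; auto).
  assert (cs : c <> s) by (intro; subst; apply (tw_not_adj u s); auto; apply adj_sym; auto).
  assert (ut : u <> t) by (intro; subst; apply (tw_not_adj c t); [apply tw_sym; auto| apply adj_sym; auto]).
  assert (hG1 := GPsee u s c (adj_sym _ _ hsu) nxc (fun ee => uc (eq_sym ee)) cs ncu
                  (fun hh => nsc (adj_sym _ _ hh))).
  assert (hG2 := GPsee c t u (adj_sym _ _ htc) nxu uc ut nuc
                  (fun hh => ntu (adj_sym _ _ hh))).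
  destruct HYc as [h|[al [hal h]]].
  - apply h in hu. apply h in hc. destruct hu as [angu hu]. destruct hc as [angc hc].
    destruct hG1 as [[_ g1]|[g [hg [xg _]]]]; [|exact (PU1 X c g HX angc hg xg)].
    destruct hG2 as [[_ g2]|[g [hg [xg _]]]]; [|exact (PU1 X u g HX angu hg xg)].
    destruct x0ex as [x hx].
    destruct (g1 x hx) as [_ a2]. destruct (g2 x hx) as [b1 _].
    destruct (hc x hx) as [ec _]. destruct (hu x hx) as [_ fu].
    apply (ef_contra (c,u)).
    + apply (e_tr (c,x)); auto. apply Rsym; auto.
    + apply (f_tr (x,u)); auto. apply Rsym; auto.
  - apply h in hu. apply h in hc. destruct hu as [xau [eu fu]]. destruct hc as [xac [ec fc]].
    destruct hG1 as [[ang _]|[g [hg [xg n1]]]]; [exact (PU1 X c al HX ang hal xac)|].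
    destruct hG2 as [[ang _]|[g' [hg' [xg' n2]]]]; [exact (PU1 X u al HX ang hal xau)|].
    assert (g = al) by (apply NNPP; intro; apply (PU2 X c g al); auto). subst g.
    assert (g' = al) by (apply NNPP; intro; apply (PU2 X u g' al); auto). subst g'.
    destruct n1 as [a1 a2]. destruct n2 as [b1 b2].
    apply (ef_contra (u,c)).
    + apply (e_tr (u,al)); auto.
    + apply (f_tr (al,c)); auto.
Qed.


Lemma list_min : forall (P : T -> Prop) (le : T -> T -> Prop) (l : list T),
  (forall x y z, le x y -> le y z -> le x z) -> (forall x, le x x) ->
  (forall x y, P x -> P y -> le x y \/ le y x) ->
  (exists x, In x l /\ P x) -> exists m, In m l /\ P m /\ forall y, In y l -> P y -> le m y.
Proof.
  intros P le l htr hrf htot. induction l as [|a l IH]; intros [x [hx px]].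
  - destruct hx.
  - destruct (classic (exists x, In x l /\ P x)) as [hex|hnex].
    + destruct (IH hex) as [m [hm [pm hmin]]].
      destruct (classic (P a)) as [pa|npa].
      * destruct (htot a m pa pm) as [lam|lma].
        -- exists a. split; [left; auto|]. split; auto.
           intros y [ey|hy] py; [subst; auto|]. apply (htr a m y); auto.
        -- exists m. split; [right; auto|]. split; auto.
           intros y [ey|hy] py; [subst; auto|]. auto.
      * exists m. split; [right; auto|]. split; auto.
        intros y [ey|hy] py; [subst; tauto|]. auto.
    + destruct hx as [ex|hx]; [|exfalso; apply hnex; exists x; auto].
      subst x. exists a. split; [left; auto|]. split; auto.
      intros y [ey|hy] py; [subst; auto|]. exfalso; apply hnex; exists y; auto.
Qed.

Lemma mainW : forall (l : list T), (exists u, Y u) -> (forall v, ~ X v -> In v l) ->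
  (exists a b, adj a b /\ forall c, ~ X c -> c <> a -> c <> b -> ~ adj c a /\ ~ adj c b) \/
  (exists u y s t, Y u /\ Y y /\ u <> y /\ adj s u /\ adj y s /\ adj y t /\ ~ adj t u /\
     (forall r, adj r u -> adj r y)).
Proof.
  intros l [u0 hu0] hl.
  destruct (list_min Y (fun x y => forall r, adj r x -> adj r y) l) as [u [_ [hu hmin]]].
  - intros x y z h1 h2 r hr. auto.
  - auto.
  - intros x y hx hy. destruct (classic (x = y)) as [ee|ne].
    { subst; left; auto. }
    apply NNPP. intro hn.
    assert (h1 : exists s, adj s x /\ ~ adj s y).
    { apply NNPP. intro hh. apply hn. left. intros r hr. apply NNPP. intro h'. apply hh.
      exists r; auto. }
    assert (h2 : exists t, adj t y /\ ~ adj t x).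
    { apply NNPP. intro hh. apply hn. right. intros r hr. apply NNPP. intro h'. apply hh.
      exists r; auto. }
    destruct h1 as [s [hs1 hs2]]. destruct h2 as [t [ht1 ht2]].
    apply (E x y s t); auto.
  - exists u0. split; auto. apply hl. apply Ynx; auto.
  - assert (nxu : ~ X u) by (apply Ynx; auto).
    destruct (W2 u nxu) as [s0 hs0].
    destruct (classic (exists s y, adj s u /\ adj y s /\ y <> u)) as [[s [y [hsu [hys yu]]]]|hno].
    + right.
      assert (htw : tw X u y) by (apply (W1tw u s y); auto; apply adj_sym; auto).
      assert (nxy : ~ X y) by apply hys.
      assert (hy : Y y) by (apply (Y_closed u y); auto).
      assert (le_uy : forall r, adj r u -> adj r y) by (apply hmin; auto; apply hl; auto).
      assert (hdiff : exists t, adj t y /\ ~ adj t u).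
      { apply NNPP. intro hh. apply (TL u y nxu nxy (fun ee => yu (eq_sym ee))).
        - intro r. split; auto. intro h. apply NNPP. intro h'. apply hh. exists r; auto.
        - exists s; auto. }
      destruct hdiff as [t [hty ntu]].
      exists u, y, s, t.
      exact (conj hu (conj hy (conj (fun ee => yu (eq_sym ee)) (conj hsu (conj hys
        (conj (adj_sym _ _ hty) (conj ntu le_uy))))))).
    + left. exists u, s0. split.
      { apply adj_sym; auto. }
      assert (ns : forall r, adj r s0 -> r = u).
      { intros r hr. apply NNPP. intro ne. apply hno. exists s0, r. auto. }
      intros c hc cu cs. split.
      * intro hcu. apply (TL s0 c).
        -- apply hs0.
        -- exact hc.
        -- intro; subst; auto.
        -- intro r. split; intro hr.
           ++ assert (r = u) by (apply ns; auto). subst. apply adj_sym; auto.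
           ++ assert (r = u) by (apply NNPP; intro ne; apply hno; exists c, r; auto). subst.
              apply adj_sym; exact hs0.
        -- exists u; apply adj_sym; auto.
      * intro hcs. apply cu. apply ns; auto.
Qed.


Lemma adj_irr : forall a, ~ adj a a.
Proof. intros a [_ [_ [h _]]]. apply h; auto. Qed.

Ltac adjsolve :=
  first [ assumption | apply adj_sym; assumption
        | exfalso; match goal with
          | H: adj ?a ?a |- _ => exact (adj_irr _ H)
          | H: adj ?a ?b, N: ~ adj ?a ?b |- _ => exact (N H)
          | H: adj ?a ?b, N: ~ adj ?b ?a |- _ => exact (N (adj_sym _ _ H))
          end ].

Lemma five : forall l u y s t, NoDup l -> length l = 5 -> (forall v, ~ X v <-> In v l) ->
  Y u -> Y y -> u <> y -> adj s u -> adj y s -> adj y t -> ~ adj t u ->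
  (forall r, adj r u -> adj r y) -> False.
Proof.
  intros l u y s t hnd hlen hl hu hy uy hsu hys hyt ntu hle.
  assert (nxu : ~ X u) by apply hsu. assert (nxs : ~ X s) by apply hsu.
  assert (nxy : ~ X y) by apply hys. assert (nxt : ~ X t) by apply (proj2 hyt).
  assert (ts : t <> s) by (intro; subst; tauto).
  assert (tuy : tw X u y) by (apply (W1tw u s y); auto; apply adj_sym; auto).
  assert (tst : tw X s t) by (apply (W1tw s y t); auto; apply adj_sym; auto).
  assert (nuy : ~ adj u y) by (apply tw_not_adj; auto).
  assert (nst : ~ adj s t) by (apply tw_not_adj; auto).
  assert (us : u <> s) by (intro; subst; apply (adj_irr s); auto).
  assert (ut : u <> t) by (intro; subst; apply ntu; apply hsu || tauto).
  assert (sy : s <> y) by (intro; subst; apply (adj_irr y); auto).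
  assert (yt : y <> t) by (intro; subst; apply (adj_irr t); auto).
  assert (hz : exists z, In z l /\ ~ In z [u; s; y; t]).
  { apply NNPP. intro hn.
    assert (hinc : incl l [u; s; y; t]).
    { intros z hz. apply NNPP. intro h. apply hn. exists z; auto. }
    assert (hh := NoDup_incl_length hnd hinc). simpl in hh. lia. }
  destruct hz as [z [hzl hzn]]. simpl in hzn.
  assert (zu : z <> u) by (intro; subst; tauto). assert (zs : z <> s) by (intro; subst; tauto).
  assert (zy : z <> y) by (intro; subst; tauto). assert (zt : z <> t) by (intro; subst; tauto).
  assert (nxz : ~ X z) by (apply hl; auto).
  assert (all : forall w, ~ X w -> w = u \/ w = s \/ w = y \/ w = t \/ w = z).
  { intros w hw. apply NNPP. intro hn.
    assert (hnd6 : NoDup [w; u; s; y; t; z]).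
    { repeat constructor; simpl; intuition congruence. }
    assert (hinc : incl [w; u; s; y; t; z] l).
    { intros q hq. simpl in hq. apply hl.
      destruct hq as [hq|[hq|[hq|[hq|[hq|[hq|hq]]]]]]; subst; auto. }
    assert (hh := NoDup_incl_length hnd6 hinc). simpl in hh. lia. }
  assert (caseA : tw X s z -> False).
  { intro tsz.
    assert (tz : tw X t z) by (apply (tw_trans X t s z); auto; apply tw_sym; auto).
    assert (nsz : ~ adj s z) by (apply tw_not_adj; auto).
    assert (ntz : ~ adj t z) by (apply tw_not_adj; auto).
    destruct (classic (adj z u)) as [azu|nazu]; destruct (classic (adj z y)) as [azy|nazy].
    - apply (TL z s nxz nxs zs).
      + intro r. split; intro hr; assert (nxr : ~ X r) by (apply hr);
          destruct (all r nxr) as [ -> | [ -> | [ -> | [ -> | -> ] ] ] ]; adjsolve.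
      + exists u; apply adj_sym; auto.
    - apply nazy, hle; auto.
    - apply (TL z t nxz nxt zt).
      + intro r. split; intro hr; assert (nxr : ~ X r) by (apply hr);
          destruct (all r nxr) as [ -> | [ -> | [ -> | [ -> | -> ] ] ] ]; adjsolve.
      + exists y; apply adj_sym; auto.
    - destruct (W2 z nxz) as [w hw]. assert (nxw : ~ X w) by apply hw.
      destruct (all w nxw) as [ -> | [ -> | [ -> | [ -> | -> ] ] ] ]; adjsolve. }
  assert (caseB : tw X u z -> False).
  { intro tuz.
    assert (hz : Y z) by (apply (Y_closed u z); auto).
    assert (tyz : tw X y z) by (apply (tw_trans X y u z); auto; apply tw_sym; auto).
    assert (nuz : ~ adj u z) by (apply tw_not_adj; auto).
    assert (nyz : ~ adj y z) by (apply tw_not_adj; auto).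
    destruct (classic (adj z s)) as [azs|nazs]; destruct (classic (adj z t)) as [azt|nazt].
    - apply (TL z y nxz nxy zy).
      + intro r. split; intro hr; assert (nxr : ~ X r) by (apply hr);
          destruct (all r nxr) as [ -> | [ -> | [ -> | [ -> | -> ] ] ] ]; adjsolve.
      + exists s; apply adj_sym; auto.
    - apply (TL z u nxz nxu zu).
      + intro r. split; intro hr; assert (nxr : ~ X r) by (apply hr);
          destruct (all r nxr) as [ -> | [ -> | [ -> | [ -> | -> ] ] ] ]; adjsolve.
      + exists s; apply adj_sym; auto.
    - apply (E z u t s hz hu zu); auto.
      + apply adj_sym; auto.
      + intro h; apply nazs, adj_sym; auto.
    - destruct (W2 z nxz) as [w hw]. assert (nxw : ~ X w) by apply hw.
      destruct (all w nxw) as [ -> | [ -> | [ -> | [ -> | -> ] ] ] ]; adjsolve. }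
  destruct (W2 z nxz) as [w hw]. assert (nxw : ~ X w) by apply hw.
  destruct (all w nxw) as [ -> | [ -> | [ -> | [ -> | -> ] ] ] ].
  - apply caseA. exact (proj1 (W1tw s u z hsu (adj_sym _ _ hw) zs)).
  - apply caseB. exact (proj1 (W1tw u s z (adj_sym _ _ hsu) (adj_sym _ _ hw) zu)).
  - apply caseA. exact (proj1 (W1tw s y z (adj_sym _ _ hys) (adj_sym _ _ hw) zs)).
  - apply caseB. exact (tw_trans X u y z tuy (proj1 (W1tw y t z hyt (adj_sym _ _ hw) zy))).
  - exact (adj_irr _ hw).
Qed.

End YY.
End WW.
End Basics.


Section Fin.
Variable T : Type.
Variable R : T * T -> T * T -> Prop.
Hypothesis H2 : is_2structure R.
Hypothesis Hsig : prime_on R (fun _ => True).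

Lemma list_remove : forall (l : list T) a, NoDup l -> In a l ->
  exists l', NoDup l' /\ (forall v, In v l' <-> (In v l /\ v <> a)) /\ S (length l') = length l.
Proof.
  induction l as [|x l IH]; intros a hnd ha.
  - destruct ha.
  - inversion hnd as [|x' l' hx hnd' E]. subst.
    destruct (classic (x = a)) as [e|ne].
    + subst x. exists l. split; auto. split; auto.
      intro v; split.
      * intro hv. split; [right; auto|]. intro; subst; tauto.
      * intros [[e|hv] nv]; [subst; tauto|auto].
    + destruct ha as [e|ha]; [tauto|].
      destruct (IH a hnd' ha) as [l'' [hnd'' [hin hlen]]].
      exists (x :: l''). split.
      * constructor; auto. intro h. apply hx. apply hin; auto.
      * split.
        -- intro v; split.
           ++ intros [e|hv]; [subst; split; [left; auto|auto]|].
              apply hin in hv. destruct hv. split; [right|]; auto.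
           ++ intros [[e|hv] nv]; [left; auto|right; apply hin; auto].
        -- simpl. rewrite hlen. auto.
Qed.

Lemma ER_iter : forall (X : T -> Prop) k B l, (forall x, X x -> B x) -> prime_on R B -> NoDup l ->
  (forall v, ~ B v <-> In v l) -> length l = 2 * k + 2 ->
  exists v w, ~ X v /\ ~ X w /\ v <> w /\ prime_on R (fun u => u <> v /\ u <> w).
Proof.
  intros X k. induction k as [|k IH]; intros B l hXB hB hnd hl hlen.
  - destruct l as [|v [|w [|z l]]]; simpl in hlen; try lia.
    inversion hnd as [|v' l' hv hnd' E]. subst.
    assert (vw : v <> w) by (intro; subst; apply hv; left; auto).
    exists v, w. split; [intro hx; apply (proj2 (hl v)); [left; auto| apply hXB; auto]|].
    split; [intro hx; apply (proj2 (hl w)); [right; left; auto| apply hXB; auto]|].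
    split; auto.
    apply (prime_ext T R B); auto. intro u. split.
    + intro hu. split; intro e; subst.
      * apply (proj2 (hl v)); simpl; auto.
      * apply (proj2 (hl w)); simpl; auto.
    + intros [uv uw]. apply NNPP. intro hn. apply hl in hn. simpl in hn. intuition congruence.
  - destruct l as [|a0 [|b0 l0]]; simpl in hlen; try lia.
    inversion hnd as [|a' l' ha0 hnd' E]. subst.
    assert (ab0 : a0 <> b0) by (intro; subst; apply ha0; left; auto).
    assert (na0 : ~ B a0) by (apply hl; left; auto).
    assert (nb0 : ~ B b0) by (apply hl; right; left; auto).
    destruct (ER T R H2 Hsig B a0 b0 hB na0 nb0 ab0) as [a [b [na [nb [nab hp]]]]].
    assert (ha : In a (a0 :: b0 :: l0)) by (apply hl; auto).
    destruct (list_remove _ a hnd ha) as [l1 [hnd1 [hin1 hlen1]]].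
    assert (hb1 : In b l1) by (apply hin1; split; auto; apply hl; auto).
    destruct (list_remove _ b hnd1 hb1) as [l2 [hnd2 [hin2 hlen2]]].
    apply (IH (U2 T B a b) l2); auto.
    + intros x hx. left. auto.
    + intro v. unfold U2. rewrite hin2, hin1, <- hl. tauto.
    + simpl in hlen1. lia.
Qed.

Lemma angle_restr : forall X a b u, in_angle R (U2 T X a b) u -> in_angle R X u.
Proof.
  intros X a b u [hu [_ hA]]. split; [unfold U2 in hu; tauto|].
  apply (restr_set T R (addv (U2 T X a b) u) (addv X u) (U2 T X a b)); auto.
  - split; [unfold addv; tauto|]. exact hA.
  - unfold addv, U2; intros x [h|h]; auto.
  - unfold addv; auto.
  - unfold U2; auto.
  - unfold addv; intros x [h|h] hP; auto. subst; tauto.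
Qed.

Lemma Xa_restr : forall X a b g u, X g -> in_Xalpha R (U2 T X a b) g u -> in_Xalpha R X g u.
Proof.
  intros X a b g u hg [hu hM]. split; [unfold U2 in hu; tauto|].
  apply (restr_set T R (addv (U2 T X a b) u) (addv X u) (fun z => z = g \/ z = u)); auto.
  - unfold addv, U2; intros x [h|h]; auto.
  - unfold addv; intros x [h|h]; subst; auto.
Qed.


Lemma qa_transfer : forall X (Y : T -> Prop) e f a b u, prime_on R X ->
  is_class R e -> is_class R f -> ~ (forall p, e p <-> f p) ->
  ((forall v, Y v <-> in_angle_ef R X e f v) \/
   (exists al, X al /\ forall v, Y v <-> in_Xalpha_ef R X al e f v)) ->
  Y u -> (in_angle R (U2 T X a b) u \/ exists g, X g /\ in_Xalpha R (U2 T X a b) g u) ->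
  exists Y', in_qa R (U2 T X a b) Y'.
Proof.
  intros X Y e f a b u hX He Hf Hef HYc hu hP.
  destruct (proj1 hX) as [x0 [_ [_ [hx0 _]]]].
  destruct HYc as [h|[al [hal h]]]; apply h in hu.
  - destruct hP as [hang|[g [hg hxa]]].
    + exists (in_angle_ef R (U2 T X a b) e f). split.
      * exists u. split; auto. intros al hal. destruct hu as [_ hu].
        destruct (hu x0 hx0) as [e0 f0].
        destruct hang as [hnu [_ hA]].
        assert (hh : R (al,u) (x0,u) /\ R (u,al) (u,x0)).
        { apply hA; unfold addv, U2 in *; auto. }
        destruct hh as [r1 r2]. split.
        -- apply (class_eq T R H2 e (u,x0) (u,al) He e0). apply Rsym in r2; auto.
        -- apply (class_eq T R H2 f (x0,u) (al,u) Hf f0). apply Rsym in r1; auto.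
      * exists e, f. split; auto. split; auto. split; auto. left. intro v; tauto.
    + exfalso. apply (PU1 T R H2 X u g hX (proj1 hu) hg). apply (Xa_restr X a b); auto.
  - destruct hP as [hang|[g [hg hxa]]].
    + exfalso. apply (PU1 T R H2 X u al hX (angle_restr X a b u hang) hal (proj1 hu)).
    + assert (g = al).
      { apply NNPP. intro ne. apply (PU2 T R H2 X u g al hX hg hal ne); auto.
        apply (Xa_restr X a b); auto. apply hu. }
      subst g.
      exists (in_Xalpha_ef R (U2 T X a b) al e f). split.
      * exists u. split; auto. apply hu.
      * exists e, f. split; auto. split; auto. split; auto. right. exists al. split.
        -- unfold U2; auto.
        -- intro v; tauto.
Qed.

Lemma main_ind : forall n (X : T -> Prop) l, length l = n -> prime_on R X -> NoDup l ->
  (forall v, ~ X v <-> In v l) -> 4 <= n -> (exists Y, in_qa R X Y) ->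
  exists v w, ~ X v /\ ~ X w /\ v <> w /\ prime_on R (fun u => u <> v /\ u <> w).
Proof.
  intro n. induction n as [n IH] using (well_founded_induction lt_wf).
  intros X l hlen hX hnd hl h4 [Y hY].
  destruct (Nat.Even_or_Odd n) as [[k hk]|[k hk]].
  - apply (ER_iter X (k - 1) X l); auto. lia.
  - destruct (classic (exists u, ~ X u /\ prime_on R (addv X u))) as [[u [hu hpu]]|hnoext].
    { assert (hul : In u l) by (apply hl; auto).
      destruct (list_remove l u hnd hul) as [l1 [hnd1 [hin1 hlen1]]].
      apply (ER_iter X (k - 1) (addv X u) l1); auto.
      - intros x hx; left; auto.
      - intro v. rewrite hin1, <- hl. unfold addv. tauto.
      - lia. }
    destruct (classic (exists a b c, ~ X a /\ ~ X b /\ a <> b /\ prime_on R (U2 T X a b) /\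
                 ~ X c /\ c <> a /\ c <> b /\ prime_on R (addv (U2 T X a b) c)))
      as [[a [b [c [ha [hb [nab [hab [hc [ca [cb hpc]]]]]]]]]]|hnotrip].
    { assert (hal : In a l) by (apply hl; auto).
      destruct (list_remove l a hnd hal) as [l1 [hnd1 [hin1 hlen1]]].
      assert (hbl : In b l1) by (apply hin1; split; auto; apply hl; auto).
      destruct (list_remove l1 b hnd1 hbl) as [l2 [hnd2 [hin2 hlen2]]].
      assert (hcl : In c l2) by (apply hin2; split; auto; apply hin1; split; auto; apply hl; auto).
      destruct (list_remove l2 c hnd2 hcl) as [l3 [hnd3 [hin3 hlen3]]].
      apply (ER_iter X (k - 2) (addv (U2 T X a b) c) l3); auto.
      - intros x hx; left; left; auto.
      - intro v. rewrite hin3, hin2, hin1, <- hl. unfold addv, U2. tauto.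
      - lia. }
    assert (NoExt : forall v, ~ X v -> ~ prime_on R (addv X v)).
    { intros v hv hp. apply hnoext. exists v; auto. }
    assert (HW : forall a b c, ~ X a -> ~ X b -> a <> b -> prime_on R (U2 T X a b) ->
       ~ X c -> c <> a -> c <> b -> ~ prime_on R (addv (U2 T X a b) c)).
    { intros a b c ha hb nab hab hc ca cb hp. apply hnotrip.
      exists a, b, c. tauto. }
    destruct hY as [hYne [e [f [He [Hf [Hef HYc]]]]]].
    destruct (mainW T R H2 Hsig X hX NoExt HW Y e f He Hf Hef HYc l hYne
               (fun v hv => proj1 (hl v) hv)) as
      [[a [b [hab hiso]]]|[u [y [s [t [hu [hy [uy [hsu [hys [hyt [ntu hle]]]]]]]]]]]].
    + exists a, b. split; [apply hab|]. split; [apply hab|]. split; [apply hab|].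
      apply (IPL T R H2 Hsig X hX HW a b hab hiso).
    + destruct (classic (k = 2)) as [k2|k2].
      * exfalso. subst k.
        exact (five T R H2 Hsig X hX NoExt HW Y e f He Hf Hef HYc l u y s t hnd ltac:(lia) hl hu hy uy hsu hys hyt ntu hle).
      * assert (nxu : ~ X u) by apply hsu.
        assert (nxy : ~ X y) by apply hys.
        assert (nxt : ~ X t) by apply (proj2 hyt).
        assert (htw : tw T R X u y).
        { apply (W1tw T R X hX HW u s y); auto. apply adj_sym; auto. }
        assert (nuy : ~ adj T R X u y) by (apply (tw_not_adj T R H2 X hX); auto).
        assert (ut : u <> t) by (intro; subst; apply nuy, adj_sym; auto).
        assert (hG : in_angle R (U2 T X y t) u \/ exists g, X g /\ in_Xalpha R (U2 T X y t) g u).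
        { exact (GP T R H2 X HW y t u hyt nxu uy ut nuy (fun h => ntu (adj_sym T R X u t h))). }
        destruct (qa_transfer X Y e f y t u hX He Hf Hef HYc hu hG) as [Y' hY'].
        assert (hyl : In y l) by (apply hl; auto).
        destruct (list_remove l y hnd hyl) as [l1 [hnd1 [hin1 hlen1]]].
        assert (ty : t <> y) by (intro; subst; apply (adj_irr T R X y); auto).
        assert (htl : In t l1) by (apply hin1; split; auto; apply hl; auto).
        destruct (list_remove l1 t hnd1 htl) as [l2 [hnd2 [hin2 hlen2]]].
        assert (hp : prime_on R (U2 T X y t)) by apply hyt.
        destruct (IH (length l2) ltac:(lia) (U2 T X y t) l2 eq_refl hp hnd2) as
          [v [w [hv [hw [vw hpr]]]]]; auto.
        -- intro v. rewrite hin2, hin1, <- hl. unfold U2. tauto.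
        -- lia.
        -- exists Y'; auto.
        -- exists v, w. unfold U2 in hv, hw. split; [tauto|]. split; [tauto|]. auto.
Qed.

End Fin.

Theorem theoremB1 (T : Type) (R : T * T -> T * T -> Prop) (X : T -> Prop) :
  is_2structure R ->
  prime_on R (fun _ => True) ->
  (exists v, ~ X v) ->
  prime_on R X ->
  (exists Y, in_qa R X Y) ->
  (exists s : list T, NoDup s /\ (forall v, ~ X v <-> In v s) /\ 4 <= length s) ->
  exists v w, ~ X v /\ ~ X w /\ v <> w /\
    prime_on R (fun u => u <> v /\ u <> w).
Proof.
  intros H2 Hsig _ HX HY [s [hnd [hl h4]]].
  exact (main_ind T R H2 Hsig (length s) X s eq_refl HX hnd hl h4 HY).
Qed.
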